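(* Let $\mathfrak g=\mathfrak k\oplus\mathfrak m$ be a Pauli-spanned Cartan decomposition, and let $b_1\neq b_2$ be two commuting Pauli strings in $\tilde{\mathfrak m}$ lying in the same connected component of the frustration graph of $\mathfrak g$. Then $|\tilde{\mathfrak k}^1_2|=|\tilde{\mathfrak k}^2_1|$.
   Context: Pauli strings on $n$ qubits are tensor products of $I,X,Y,Z$, not all identity; two Pauli strings either commute or anticommute. A Pauli-spanned Cartan decomposition is $\mathfrak g=\mathfrak k\oplus\mathfrak m\subseteq\mathfrak{su}(2^n)$ with $\mathfrak k=\mathrm{span}_{i\mathbb R}\tilde{\mathfrak k}$, $\mathfrak m=\mathrm{span}_{i\mathbb R}\tilde{\mathfrak m}$, $\mathfrak g=\mathrm{span}_{i\mathbb R}\tilde{\mathfrak g}$ with $\tilde{\mathfrak g}=\tilde{\mathfrak k}\sqcup\tilde{\mathfrak m}$ the set of all Pauli strings (up to phase) $\sigma$ with $i\sigma\in\mathfrak g$, and $[\mathfrak k,\mathfrak k]\subseteq\mathfrak k$, $[\mathfrak m,\mathfrak m]\subseteq\mathfrak k$, $[\mathfrak k,\mathfrak m]\subseteq\mathfrak m$. The frustration graph of $\mathfrak g$ has vertex set $\tilde{\mathfrak g}$, with edges between anticommuting pairs. For Pauli strings $b_1,b_2,\dots$ and disjoint index lists, $\tilde{\mathfrak k}^{i_1i_2\dots}_{j_1j_2\dots}$ is the set of $k\in\tilde{\mathfrak k}$ anticommuting with every $b_{i_p}$ and commuting with every $b_{j_q}$ (no condition on other indices). *)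

(* Defs.v *)
From mathcomp Require Import all_boot.
Set Implicit Arguments. Unset Strict Implicit. Unset Printing Implicit Defensive.

(* Single-qubit Pauli (up to phase): 0 = I, 1 = X, 2 = Y, 3 = Z. *)
Definition pauli1 := 'I_4.

(* Product of single-qubit Paulis up to phase:
   I*P = P*I = P,  P*P = I,  and for distinct non-identity P,Q the product is
   the third non-identity Pauli (index 6 - P - Q since 1+2+3 = 6). *)
Definition pmul1 (a b : pauli1) : pauli1 :=
  if val a == 0 then b
  else if val b == 0 then a
  else if a == b then ord0
  else inord (6 - a - b).

Definition anti1 (a b : pauli1) : bool :=
  [&& val a != 0, val b != 0 & a != b].

(* n-qubit Pauli strings (tensor products of I,X,Y,Z), up to phase. *)
Definition pstring (n : nat) := {ffun 'I_n -> pauli1}.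

Definition pid (n : nat) : pstring n := [ffun _ => ord0].

Definition pmul n (s t : pstring n) : pstring n := [ffun i => pmul1 (s i) (t i)].

Definition anticomm n (s t : pstring n) : bool :=
  odd #|[set i | anti1 (s i) (t i)]|.

(* Pauli-spanned Cartan decomposition g = k (+) m with k = span_{iR} Kt,
   m = span_{iR} Mt.  For Pauli strings, [i s, i t] = 0 if s,t commute and
   = -2 s t (a nonzero real multiple of i * (pmul s t)) if they anticommute; hence
   [k,k] <= k, [m,m] <= k, [k,m] <= m are exactly the closure conditions below. *)
Definition cartan_decomp n (Kt Mt : {set pstring n}) : Prop :=
  [/\ (pid n \notin Kt) && (pid n \notin Mt), [disjoint Kt & Mt],
      (forall k k', k \in Kt -> k' \in Kt -> anticomm k k' -> pmul k k' \in Kt),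
      (forall m m', m \in Mt -> m' \in Mt -> anticomm m m' -> pmul m m' \in Kt) &
      (forall k m, k \in Kt -> m \in Mt -> anticomm k m -> pmul k m \in Mt)].

Definition frustration n (Gt : {set pstring n}) : rel (pstring n) :=
  fun s t => [&& s \in Gt, t \in Gt & anticomm s t].

(* Kt^{i}_{j} for a single anticommuting b_i and commuting b_j. *)
Definition ksub n (Kt : {set pstring n}) (bi bj : pstring n) : {set pstring n} :=
  [set k in Kt | anticomm k bi && ~~ anticomm k bj].

(* Main.v *)
Require Import Defs.
From mathcomp Require Import all_boot.
Ltac c4 := case=> [[|[|[|[|?]]]] ?] //.
Lemma inord1 : @inord 3 1 = Ordinal (isT : 1 < 4). Proof. by apply/val_inj; rewrite /= inordK. Qed.
Lemma inord2 : @inord 3 2 = Ordinal (isT : 2 < 4). Proof. by apply/val_inj; rewrite /= inordK. Qed.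
Lemma inord3 : @inord 3 3 = Ordinal (isT : 3 < 4). Proof. by apply/val_inj; rewrite /= inordK. Qed.
Ltac sv := rewrite /pmul1 /anti1 /= ?subnE /= ?inord1 ?inord2 ?inord3 /= ?subnE /= ?inord1 ?inord2 ?inord3 /=.
Lemma q2 : forall a b : pauli1, pmul1 a (pmul1 a b) = b.
Proof. do 2! c4; apply/val_inj; sv; done. Qed.
Lemma q3 : forall a b : pauli1, pmul1 (pmul1 a b) a = b.
Proof. do 2! c4; apply/val_inj; sv; done. Qed.
Lemma q1 : forall a b c : pauli1, anti1 (pmul1 a b) c = anti1 a c (+) anti1 b c.
Proof. do 3! c4; sv; done. Qed.
Lemma q4 : forall a b : pauli1, anti1 a b = anti1 b a.
Proof. do 2! c4. Qed.
Lemma q5 : forall a : pauli1, ~~ anti1 a a.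
Proof. c4; by rewrite /anti1 eqxx !andbF. Qed.

Lemma card_nat (T : finType) (P : pred T) : #|[set i | P i]| = \sum_i (P i : nat).
Proof.
rewrite -sum1_card big_mkcond /=; apply: eq_bigr => i _; by rewrite inE; case: (P i).
Qed.

Lemma odd_card_xor (T : finType) (P Q : pred T) :
  odd #|[set i | P i (+) Q i]| = odd #|[set i | P i]| (+) odd #|[set i | Q i]|.
Proof.
rewrite !card_nat.
have E : \sum_i ((P i (+) Q i) : nat) + \sum_i ((P i && Q i) : nat) + \sum_i ((P i && Q i) : nat)
   = \sum_i (P i : nat) + \sum_i (Q i : nat).
  rewrite -!big_split /=; apply: eq_bigr => i _; by case: (P i); case: (Q i).
by rewrite -oddD -E !oddD addbK.
Qed.

Section S.
Context {n : nat}.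
Implicit Types s t u : pstring n.

Lemma anticommC s t : anticomm s t = anticomm t s.
Proof.
rewrite /anticomm (_ : [set i | anti1 (s i) (t i)] = [set i | anti1 (t i) (s i)]) //.
by apply/setP => i; rewrite !inE q4. Qed.

Lemma anticomm_mull s t u : anticomm (pmul s t) u = anticomm s u (+) anticomm t u.
Proof.
rewrite /anticomm -odd_card_xor; congr (odd _); apply: eq_card => i.
by rewrite !inE ffunE q1.
Qed.

Lemma anticomm_mulr s t u : anticomm u (pmul s t) = anticomm u s (+) anticomm u t.
Proof. by rewrite anticommC anticomm_mull !(anticommC u). Qed.

Lemma anticommss s : anticomm s s = false.
Proof.
rewrite /anticomm (_ : [set i | anti1 (s i) (s i)] = set0) ?cards0 //.
by apply/setP => i; rewrite !inE (negbTE (q5 _)).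
Qed.

Lemma pmulK s t : pmul s (pmul s t) = t.
Proof. by apply/ffunP => i; rewrite !ffunE q2. Qed.

Lemma pmulK2 s t : pmul (pmul s t) s = t.
Proof. by apply/ffunP => i; rewrite !ffunE q3. Qed.

Definition fK (Kt : {set pstring n}) x := #|[set k in Kt | anticomm k x]|.

Lemma key (Kt : {set pstring n}) k m :
  (forall k k', k \in Kt -> k' \in Kt -> anticomm k k' -> pmul k k' \in Kt) ->
  k \in Kt -> anticomm k m -> fK Kt m = fK Kt (pmul k m).
Proof.
move=> clK kK akm.
pose psi x := if anticomm k x then pmul k x else x.
have psiK : involutive psi.
  move=> x; rewrite /psi; case h: (anticomm k x); last by rewrite h.
  by rewrite anticomm_mulr anticommss h /= pmulK.
have psiKt x : (psi x \in Kt) = (x \in Kt).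
  rewrite /psi; case h: (anticomm k x) => //; apply/idP/idP => hx.
  - by rewrite -(pmulK k x); apply: clK => //; rewrite anticomm_mulr anticommss.
  - by apply: clK.
have psiA x : anticomm (psi x) (pmul k m) = anticomm x m.
  rewrite /psi; case h: (anticomm k x).
    rewrite !anticomm_mull !anticomm_mulr anticommss akm [anticomm x k]anticommC h.
    by case: (anticomm x m).
  by rewrite anticomm_mulr [anticomm x k]anticommC h.
rewrite /fK -(card_imset _ (can_inj psiK)); apply: eq_card => x; rewrite inE.
apply/imsetP/andP => [[y] | [xK xa]].
  rewrite inE => /andP [yK ya] ->; by rewrite psiKt psiA.
exists (psi x); last by rewrite psiK.
by rewrite inE -psiA psiK psiKt xK xa.
Qed.

End S.
Arguments fK {n}.

Lemma pathlem n (Kt Mt : {set pstring n}) : cartan_decomp Kt Mt ->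
  forall N p x, size p <= N -> x \in Mt ->
  path (frustration (Kt :|: Mt)) x p -> last x p \in Mt -> fK Kt x = fK Kt (last x p).
Proof.
case=> _ dis clK clM clKM.
have MM m m' : m \in Mt -> m' \in Mt -> anticomm m m' -> fK Kt m = fK Kt m'.
  move=> hm hm' a; rewrite -(pmulK2 m m').
  apply: key => //; first exact: clM.
  by rewrite anticomm_mull anticommss [anticomm m' m]anticommC a.
have KM k m : k \in Kt -> m \in Mt -> anticomm k m -> fK Kt m = fK Kt (pmul k m).
  by move=> *; apply: key.
elim=> [|N IH] [|v1 p] x //= hs xM.
case/andP => /and3P [_ v1G axv1] hp hl.
case/setUP: v1G => v1K; last first.
  by rewrite (MM _ _ xM v1K axv1); apply: IH.
case: p hs hp hl => [|v2 p] hs hp hl.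
  by move: dis; rewrite disjoint_subset => /subsetP /(_ _ v1K); rewrite inE /= hl.
move: hp => /= /andP [/and3P [_ v2G a12] hp].
case ax2: (anticomm x v2).
  have hp' : path (frustration (Kt :|: Mt)) x (v2 :: p).
    by rewrite /= /frustration inE xM orbT v2G ax2 hp.
  exact: (IH (v2 :: p) x hs xM hp' hl).
have a1x : anticomm v1 x by rewrite anticommC.
have m1M := clKM _ _ v1K xM a1x.
rewrite (KM _ _ v1K xM a1x).
have hp' : path (frustration (Kt :|: Mt)) (pmul v1 x) (v2 :: p).
  by rewrite /= /frustration inE m1M orbT v2G anticomm_mull a12 ax2 hp.
exact: (IH (v2 :: p) _ hs m1M hp' hl).
Qed.

Theorem lemmaC1 (n : nat) (Kt Mt : {set pstring n}) (b1 b2 : pstring n) :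
  cartan_decomp Kt Mt ->
  b1 \in Mt -> b2 \in Mt -> b1 != b2 -> ~~ anticomm b1 b2 ->
  connect (frustration (Kt :|: Mt)) b1 b2 ->
  #|ksub Kt b1 b2| = #|ksub Kt b2 b1|.
Proof.
move=> H h1 h2 _ _ /connectP [p hp hl].
have E : fK Kt b1 = fK Kt b2.
  by rewrite hl; apply: (@pathlem n Kt Mt H (size p) p b1 (leqnn _) h1 hp); rewrite -hl.
pose C := [set k in Kt | anticomm k b1 && anticomm k b2].
have e1 : #|C| + #|ksub Kt b1 b2| = fK Kt b1.
  rewrite /fK -[RHS](cardsID [set k | anticomm k b2]); congr (_ + _); apply: eq_card => k;
  by rewrite !inE; case: (k \in Kt); case: (anticomm k b1); case: (anticomm k b2).
have e2 : #|C| + #|ksub Kt b2 b1| = fK Kt b2.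
  rewrite /fK -[RHS](cardsID [set k | anticomm k b1]); congr (_ + _); apply: eq_card => k;
  by rewrite !inE; case: (k \in Kt); case: (anticomm k b1); case: (anticomm k b2).
by apply/eqP; rewrite -(eqn_add2l #|C|) e1 e2 E.
Qed.
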